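(* For every integer $n>2$ there exists a finite Blaschke product $B$ of degree $n$ with $M(B)\le n+1$ and $m(B)<n-1$.
   Context: A finite Blaschke product of degree $n$ is $B(z)=\alpha\prod_{k=1}^n \frac{z-a_k}{1-\overline{a_k}z}$ with $a_k\in\mathbb D=\{|z|<1\}$, $\alpha\in\mathbb T=\{|z|=1\}$; $M(B)=\sup_{|z|=1}|B'(z)|$, $m(B)=\inf_{|z|=1}|B'(z)|$. *)

(* Defs.v *)
From HB Require Import structures.
From mathcomp Require Import all_boot all_order all_algebra.
From mathcomp Require Import complex.
From mathcomp Require Import reals.
Set Implicit Arguments. Unset Strict Implicit. Unset Printing Implicit Defensive.
Import Order.TTheory GRing.Theory Num.Theory.
Local Open Scope ring_scope.
Local Open Scope complex_scope.

Section Blaschke.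
Variable R : realType.
Local Notation C := R[i].

Definition bnum n (a : 'I_n -> C) : {poly C} := \prod_(k < n) ('X - (a k)%:P).
Definition bden n (a : 'I_n -> C) : {poly C} :=
  \prod_(k < n) (1 - ((a k)^*)%:P * 'X).

Definition blaschke n (alpha : C) (a : 'I_n -> C) (z : C) : C :=
  alpha * ((bnum a).[z] / (bden a).[z]).

(* Its derivative B'(z): B is the rational function alpha * P/Q, so by the quotient rule
   B' = alpha * (P' Q - P Q') / Q^2 (P', Q' formal polynomial derivatives). *)
Definition blaschke' n (alpha : C) (a : 'I_n -> C) (z : C) : C :=
  alpha * (((bnum a)^`().[z] * (bden a).[z] - (bnum a).[z] * (bden a)^`().[z])
           / ((bden a).[z] ^+ 2)).

Definition is_blaschke_data n (alpha : C) (a : 'I_n -> C) : Prop :=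
  `|alpha| = 1 /\ (forall k, `|a k| < 1).

End Blaschke.

(* Main.v *)
Require Import Defs.
From HB Require Import structures.
From mathcomp Require Import all_boot all_order all_algebra.
From mathcomp Require Import complex.
From mathcomp Require Import reals.
From mathcomp Require Import ring lra.
Import Order.TTheory GRing.Theory Num.Theory.
Local Open Scope ring_scope.
Local Open Scope complex_scope.
Lemma bound (R : realFieldType) (x y : R) : x^+2 + y^+2 = 1 ->
  (1 - ((-(2/5))^+2 + 0^+2)) / ((x - -(2/5))^+2 + (y - 0)^+2)
  + (1 - (0^+2 + (2/5)^+2)) / ((x - 0)^+2 + (y - 2/5)^+2)
  + (1 - (0^+2 + (-(2/5))^+2)) / ((x - 0)^+2 + (y - -(2/5))^+2) <= 4.
Proof.
move=> h.
have hx : -1 <= x by nra.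
have hy1 : -1 <= y by nra.
have hy2 : y <= 1 by nra.
have e1 : (x - -(2/5))^+2 + (y - 0)^+2 = 29/25 + 4/5*x by nra.
have e2 : (x - 0)^+2 + (y - 2/5)^+2 = 29/25 - 4/5*y by nra.
have e3 : (x - 0)^+2 + (y - -(2/5))^+2 = 29/25 + 4/5*y by nra.
have n1 : (1 - ((-(2/5))^+2 + 0^+2)) = 21/25 :> R by field.
have n2 : (1 - (0^+2 + (2/5)^+2)) = 21/25 :> R by field.
have n3 : (1 - (0^+2 + (-(2/5))^+2)) = 21/25 :> R by field.
rewrite e1 e2 e3 n1 n2 n3.
have p1 : 0 < 29/25 + 4/5*x :> R by lra.
have p2 : 0 < 29/25 - 4/5*y :> R by lra.
have p3 : 0 < 29/25 + 4/5*y :> R by lra.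
set d1 := 29/25 + 4/5*x in p1 *; set d2 := 29/25 - 4/5*y in p2 *; set d3 := 29/25 + 4/5*y in p3 *.
have -> : 21/25/d1 + 21/25/d2 + 21/25/d3 = (21/25*(d2*d3 + d1*(d2+d3)))/(d1*(d2*d3)).
  by field; rewrite !gt_eqF.
have q : d2 * d3 = 841/625 - 16/25*(1 - x^+2) by rewrite /d2 /d3; nra.
have s : d2 + d3 = 58/25 by rewrite /d2 /d3; lra.
rewrite q s ler_pdivrMr; last by rewrite -q; apply: mulr_gt0 => //; apply: mulr_gt0.
rewrite /d1.
have h1 : 0 <= (x+1) * x^+2 by rewrite mulr_ge0 ?sqr_ge0 // ; lra.
have h2 : 0 <= (x + 91/100)^+2 by apply: sqr_ge0.
nra.
Qed.

Lemma wit (R : realFieldType) :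
  (1 - ((-(2/5))^+2 + 0^+2)) / (((1:R) - -(2/5))^+2 + (0 - 0)^+2)
  + (1 - (0^+2 + (2/5)^+2)) / ((1 - 0)^+2 + (0 - 2/5)^+2)
  + (1 - (0^+2 + (-(2/5))^+2)) / ((1 - 0)^+2 + (0 - -(2/5))^+2) = 381/203.
Proof. by field. Qed.

Lemma fin_le (R : realFieldType) (T : R) m : T <= 4 -> T + m%:R <= m.+4%:R.
Proof. move=> h; rewrite -[m.+4]addn4 natrD addrC lerD2l; exact: h. Qed.

Lemma fin_lt (R : realFieldType) m : 381/203 + m%:R < m.+3.-1%:R :> R.
Proof. rewrite /= -[m.+2]addn2 natrD addrC ltrD2l; lra. Qed.

Section S.
Variable R : realType.
Local Notation C := R[i].

Lemma nCK (x : C) : x * x^* = `|x|^+2.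
Proof. by rewrite normCK. Qed.

Lemma logder (n : nat) (F : 'I_n -> {poly C}) (z : C) :
  (forall k, (F k).[z] != 0) ->
  (\prod_(k < n) F k)^`().[z] =
  (\prod_(k < n) F k).[z] * \sum_(k < n) (F k)^`().[z] / (F k).[z].
Proof.
elim: n F => [|n IH] F hF.
  by rewrite !big_ord0 mulr0 -polyC1 derivC horner0.
rewrite !big_ord_recr /= derivM hornerD !hornerM IH; last by move=> k.
set P := (\prod_(_ < _) _).[z]; set S := \sum_(_ < _) _.
have := hF ord_max; set f := (F ord_max).[z] => hf.
rewrite mulrDr; congr (_ + _); first by rewrite mulrAC.
by rewrite -mulrA [f * _]mulrC divfK.
Qed.

Lemma key n (alpha : C) (a : 'I_n -> C) (z : C) :
  `|alpha| = 1 -> (forall k, `|a k| < 1) -> `|z| = 1 ->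
  `|blaschke' alpha a z| = \sum_(k < n) (1 - `|a k|^+2) / `|z - a k|^+2.
Proof.
move=> ha hak hz.
have zz : z * z^* = 1 by rewrite nCK hz expr1n.
have z0 : z != 0 by apply/eqP=> z0; move: hz; rewrite z0 normr0 => /eqP; rewrite eq_sym oner_eq0.
have hu k : z - a k != 0.
  apply/eqP=> /eqP; rewrite subr_eq0 => /eqP e; move: (hak k); rewrite -e hz ltxx //.
have hv k : 1 - (a k)^* * z = z * (z - a k)^*.
  by rewrite rmorphB /= mulrBr zz mulrC.
have hv0 k : 1 - (a k)^* * z != 0.
  by rewrite hv mulf_neq0 // conjc_eq0.
have eP : (bnum a).[z] = \prod_(k < n) (z - a k).
  by rewrite /bnum horner_prod; apply: eq_bigr => k _; rewrite hornerXsubC.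
have eQ : (bden a).[z] = \prod_(k < n) (1 - (a k)^* * z).
  by rewrite /bden horner_prod; apply: eq_bigr => k _; rewrite !hornerE.
have P0 : (bnum a).[z] != 0 by rewrite eP; apply/prodf_neq0=> k _.
have Q0 : (bden a).[z] != 0 by rewrite eQ; apply/prodf_neq0=> k _.
have dP : (bnum a)^`().[z] = (bnum a).[z] * \sum_(k < n) (z - a k)^-1.
  rewrite /bnum logder; last by move=> k; rewrite hornerXsubC.
  by congr (_ * _); apply: eq_bigr => k _; rewrite derivXsubC hornerXsubC hornerC mul1r.
have dQ : (bden a)^`().[z] = (bden a).[z] * \sum_(k < n) (- (a k)^*) / (1 - (a k)^* * z).
  rewrite /bden logder; last by move=> k; rewrite !hornerE.
  congr (_ * _); apply: eq_bigr => k _.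
  by rewrite derivB -polyC1 derivC deriv_mulC derivX !hornerE.
set P := (bnum a).[z] in P0 dP *; set Q := (bden a).[z] in Q0 dQ *.
set SP := \sum_(k < n) _ in dP; set SQ := \sum_(k < n) _ in dQ.
have e1 : blaschke' alpha a z = alpha * (P / Q) * (SP - SQ).
  by rewrite /blaschke' dP dQ -/P -/Q; field.
have e2 : SP - SQ = z^-1 * \sum_(k < n) (1 - `|a k|^+2) / `|z - a k|^+2.
  rewrite /SP /SQ -sumrB mulr_sumr; apply: eq_bigr => k _.
  rewrite hv -!nCK.
  have -> : (1 : C) - a k * (a k)^* = z * z^* - a k * (a k)^* by rewrite zz.
  rewrite !rmorphB /=.
  have h2 := hu k.
  have h3 : z^* - (a k)^* != 0 by rewrite -rmorphB conjc_eq0.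
  by field; apply/and3P; split.
have ePQ : `|P| = `|Q|.
  rewrite /P /Q eP eQ !normr_prod; apply: eq_bigr => k _.
  by rewrite hv normrM hz mul1r normcJ.
rewrite e1 e2 !normrM normfV ePQ mulfV ?normr_eq0 // ha normfV hz invr1 !mul1r.
apply: ger0_norm; apply: sumr_ge0 => k _; apply: divr_ge0; last exact: exprn_ge0.
by rewrite subr_ge0 exprn_ile1 // ltW.
Qed.

Lemma sqn (w : C) : `|w|^+2 = ((complex.Re w)^+2 + (complex.Im w)^+2)%:C.
Proof. by rewrite add_Re2_Im2. Qed.

Lemma term_eq (p q x y : R) :
  (1 - `|p +i* q|^+2) / `|(x +i* y) - (p +i* q)|^+2 =
  ((1 - (p^+2 + q^+2)) / ((x - p)^+2 + (y - q)^+2))%:C.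
Proof. by rewrite !sqn /= rmorphM fmorphV rmorphB rmorph1. Qed.

Lemma term_eq' (c : C) (x y : R) :
  (1 - `|c|^+2) / `|(x +i* y) - c|^+2 =
  ((1 - ((complex.Re c)^+2 + (complex.Im c)^+2)) / ((x - complex.Re c)^+2 + (y - complex.Im c)^+2))%:C.
Proof. by case: c => p q; rewrite !sqn /= rmorphM fmorphV rmorphB rmorph1. Qed.

Definition cc (j : nat) : C :=
  if j == 0%N then (- (2/5)) +i* 0 else if j == 1%N then 0 +i* (2/5)
  else if j == 2%N then 0 +i* (- (2/5)) else 0.

Lemma cc_lt1 j : `|cc j| < 1.
Proof.
rewrite -(expr_lt1 (n:=2)) // sqn /cc.
case: ifP => _; last case: ifP => _; last case: ifP => _; rewrite /= ltcR; lra.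
Qed.

Lemma sum_split m (z : C) : `|z| = 1 ->
  \sum_(k < m.+3) (1 - `|cc k|^+2) / `|z - cc k|^+2 =
  (1 - `|cc 0|^+2) / `|z - cc 0|^+2 + (1 - `|cc 1|^+2) / `|z - cc 1|^+2
  + (1 - `|cc 2|^+2) / `|z - cc 2|^+2 + m%:R.
Proof.
move=> hz.
rewrite -(big_mkord xpredT (fun j => (1 - `|cc j|^+2) / `|z - cc j|^+2)).
rewrite big_ltn // big_ltn // big_ltn // !addrA.
congr (_ + _).
rewrite (eq_big_nat _ _ (F2 := fun => 1)); first by rewrite sumr_const_nat subSS subSS subSS subn0.
move=> i /andP[h3 _].
have -> : cc i = 0.
  rewrite /cc; case: i h3 => [|[|[|i]]] //.
by rewrite normr0 expr0n /= subr0 subr0 hz expr1n divr1.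
Qed.
Lemma T3 (x y : R) :
  (1 - `|cc 0|^+2) / `|(x +i* y) - cc 0|^+2 + (1 - `|cc 1|^+2) / `|(x +i* y) - cc 1|^+2
  + (1 - `|cc 2|^+2) / `|(x +i* y) - cc 2|^+2 =
  ((1 - ((-(2/5))^+2 + 0^+2)) / ((x - -(2/5))^+2 + (y - 0)^+2)
  + (1 - (0^+2 + (2/5)^+2)) / ((x - 0)^+2 + (y - 2/5)^+2)
  + (1 - (0^+2 + (-(2/5))^+2)) / ((x - 0)^+2 + (y - -(2/5))^+2))%:C.
Proof.
rewrite !term_eq' /cc /=.
by rewrite !rmorphD.
Qed.
End S.

Theorem mainTheorem5 (R : realType) (n : nat) (hn : (2 < n)%N) :
  exists (alpha : R[i]) (a : 'I_n -> R[i]),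
    is_blaschke_data alpha a /\
    (forall z : R[i], `|z| = 1 -> `|blaschke' alpha a z| <= n.+1%:R) /\
    (exists z : R[i], `|z| = 1 /\ `|blaschke' alpha a z| < n.-1%:R).
Proof.
case: n hn => [|[|[|m]]] // _.
exists 1, (fun k => cc R k).
have ha : `|1 : R[i]| = 1 by rewrite normr1.
have hk : forall k : 'I_m.+3, `|cc R k| < 1 by move=> k; exact: cc_lt1.
split; first by split.
have hm : forall k : nat, (k%:R : R[i]) = (k%:R : R)%:C by move=> k; rewrite rmorph_nat.
split.
  move=> z hz; rewrite key // sum_split //.
  case: z hz => x y hz.
  have h : x^+2 + y^+2 = 1.
    have : `|x +i* y|^+2 = 1 by rewrite hz expr1n.
    by rewrite sqn /= => /complexI.
  rewrite T3 !hm -!rmorphD lecR.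
  exact: fin_le (@bound _ x y h).
have e1 : (1:R) +i* 0 = 1 by [].
exists ((1:R) +i* 0); split; first by rewrite e1 normr1.
rewrite key // ?e1 ?normr1 // sum_split ?e1 ?normr1 // -e1 T3 !hm -!rmorphD ltcR.
rewrite wit; exact: fin_lt.
Qed.
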